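(* Let $n\ge1$ and $\bar S=\{s_1<s_2<\cdots<s_k\}\subseteq[n-1]$ (possibly empty, $k\ge0$), and put $s_0=0$, $s_{k+1}=n$. Let $\hat\alpha_n^-(\bar S)$ be the number of $\sigma\in\mathcal B_n$ with $\sigma(1)<0$ and $\hat D_B(\sigma)\subseteq\bar S$. Then $$\hat\alpha_n^-(\bar S)=\binom{n}{s_1-s_0,\,s_2-s_1,\,\dots,\,s_{k+1}-s_k}\cdot S_{s_1-s_0}\cdot\prod_{j=2}^{k+1}2^{\,s_j-s_{j-1}}E_{s_j-s_{j-1}}.$$
   Context: $\mathcal B_n$ is the set of signed permutations (bijections $\sigma$ of $\{\pm1,\dots,\pm n\}$ with $\sigma(-i)=-\sigma(i)$), written as words $\sigma(1)\cdots\sigma(n)$ with $\sigma(0)=0$. $\hat D_B(\sigma)$ is the set of $i\in\{0\}\cup[n-1]$ such that either $\sigma(i)<\sigma(i+1)$ and $i$ is even, or $\sigma(i)>\sigma(i+1)$ and $i$ is odd. $E_m$ is the Euler number: the number of permutations $\tau\in\mathfrak S_m$ with $\tau(1)>\tau(2)<\tau(3)>\tau(4)<\cdots$ (so $\sum_{m\ge0}E_m x^m/m!=\tan x+\sec x$); the number of such down-up alternating signed permutations in $\mathcal B_m$ is $2^mE_m$. $S_m$ (number of snakes) is the number of $\tau\in\mathcal B_m$ with $\tau(1)>\tau(2)<\tau(3)>\cdots$ and $\tau(1)>0$. The multinomial coefficient is $\binom{n}{\gamma_1,\dots,\gamma_l}=n!/(\gamma_1!\cdots\gamma_l!)$. 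*)

(* Defs.v *)
From HB Require Import structures.
From mathcomp Require Import all_boot all_order all_algebra.
From mathcomp Require Import fingroup perm.
Set Implicit Arguments. Unset Strict Implicit. Unset Printing Implicit Defensive.
Import Order.TTheory GRing.Theory Num.Theory.

(* A signed permutation of [n] is encoded by a permutation p of 'I_n together
   with signs: sigma(j+1) = +-(p j + 1), negative iff the sign bit is true. *)
Definition sperm (n : nat) := ({perm 'I_n} * {ffun 'I_n -> bool})%type.

(* sval s i = sigma(i) for 1 <= i <= n, and sigma(0) = 0 (0 beyond n too). *)
Definition sval n (s : sperm n) (i : nat) : int :=
  match i with
  | 0 => 0%R
  | j.+1 => if insub j is Some o then
              (if s.2 o then (- (Posz (s.1 o).+1))%R else (Posz (s.1 o).+1))
            else 0%R
  end.

Definition inDB n (s : sperm n) (i : nat) : bool :=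
  ((sval s i < sval s i.+1)%R && ~~ odd i) || ((sval s i > sval s i.+1)%R && odd i).

Definition alpha_minus (n : nat) (S : seq nat) : nat :=
  #|[set s : sperm n | (sval s 1 < 0)%R &&
                        all (fun i => inDB s i ==> (i \in S)) (iota 0 n)]|.

(* Euler number: # tau in S_m with tau(1) > tau(2) < tau(3) > ... (0-indexed here) *)
Definition Euler (m : nat) : nat :=
  #|[set t : {perm 'I_m} |
     [forall i : 'I_m, forall j : 'I_m, (val j == (val i).+1) ==>
        (if odd i then t i < t j else t j < t i)]]|.

Definition Snake (m : nat) : nat :=
  #|[set s : sperm m | (0 < sval s 1)%R &&
     all (fun i => if odd i then (sval s i.+1 < sval s i)%R
                            else (sval s i < sval s i.+1)%R) (iota 1 m.-1)]|.

Definition multinomial (n : nat) (g : seq nat) : nat :=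
  n`! %/ \prod_(x <- g) x`!.

Definition gaps (n : nat) (S : seq nat) : seq nat :=
  pairmap (fun a b => b - a) 0 (rcons S n).

(* Main.v *)
Require Import Defs.
From mathcomp Require Import all_boot all_order all_algebra.
From mathcomp Require Import fingroup perm.
From mathcomp Require Import zify ring lra.
Set Implicit Arguments. Unset Strict Implicit. Unset Printing Implicit Defensive.

Module P1.
Import Order.TTheory GRing.Theory Num.Theory.

Lemma count_inj (A B : finType) (F : A -> B) (D : {set B}) (P : pred B) :
  injective F -> (forall a, F a \in D) -> #|A| = #|D| ->
  #|[set a | P (F a)]| = #|[set b in D | P b]|.
Proof.
move=> Finj FD cA.
have imD : F @: setT = D.
  apply/eqP; rewrite eqEcard; apply/andP; split.
    by apply/subsetP=> b /imsetP[a _ ->].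
  by rewrite card_imset // cardsT cA.
rewrite -(card_imset _ Finj); apply: eq_card => b.
rewrite !inE; apply/imsetP/andP.
  by move=> [a]; rewrite inE => Pa ->; rewrite FD.
move=> [bD Pb]; move: bD; rewrite -imD => /imsetP[a _ Eb].
by exists a; rewrite // inE -Eb.
Qed.

Local Open Scope ring_scope.

Definition rkn (I : finType) (f : I -> int) (i : I) : nat := #|[set j | f j < f i]|.

Lemma rkn_lt (I : finType) (f : I -> int) i j :
  injective f -> (rkn f i < rkn f j)%N = (f i < f j).
Proof.
move=> finj; rewrite /rkn.
case: (ltP (f i) (f j)) => h.
  apply: proper_card; rewrite properE; apply/andP; split.
    by apply/subsetP=> k; rewrite !inE => hk; exact: lt_trans hk h.
  by apply/negP=> /subsetP/(_ i); rewrite !inE h ltxx => /(_ isT).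
apply/negbTE; rewrite -leqNgt; apply: subset_leq_card.
by apply/subsetP=> k; rewrite !inE => hk; exact: lt_le_trans hk h.
Qed.

Lemma rkn_bound (I : finType) (f : I -> int) i : (rkn f i < #|I|)%N.
Proof.
rewrite /rkn -cardsT; apply: proper_card; rewrite properE subsetT /=.
by apply/negP=> /subsetP/(_ i); rewrite !inE ltxx => /(_ isT).
Qed.

Lemma rkn_inj (I : finType) (f : I -> int) : injective f -> injective (rkn f).
Proof.
move=> finj i j e; apply: (finj); case: (ltgtP (f i) (f j)) => // h.
  by move: h; rewrite -(rkn_lt _ _ finj) e ltnn.
by move: h; rewrite -(rkn_lt _ _ finj) e ltnn.
Qed.

Lemma nth_count_sorted (L : seq int) x :
  sorted <%R L -> x \in L -> nth 0 L (count (fun y => y < x) L) = x.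
Proof.
elim: L => //= y L IH sL; rewrite inE => /orP[/eqP->|xL].
  rewrite ltxx /=; suff -> : count (fun y0 => y0 < y) L = 0%N by [].
  apply/eqP; rewrite -leqn0 leqNgt -has_count; apply/negP=> /hasP[z zL zy].
  have := order_path_min (@lt_trans _ _) sL => /allP/(_ z zL).
  by rewrite ltNge ltW.
have yx : y < x.
  by have := order_path_min (@lt_trans _ _) sL => /allP/(_ x xL).
rewrite yx /= add0n; apply: IH => //; exact: path_sorted sL.
Qed.

Lemma rank_det (I : finType) (f g : I -> int) :
  injective f -> injective g -> codom f =i codom g ->
  (forall i, rkn f i = rkn g i) -> f =1 g.
Proof.
move=> finj ginj cfg rfg i.
pose Lf := sort <=%R (codom f); pose Lg := sort <=%R (codom g).
have sLf : sorted <%R Lf by rewrite sort_lt_sorted map_inj_uniq ?enum_uniq.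
have sLg : sorted <%R Lg by rewrite sort_lt_sorted map_inj_uniq ?enum_uniq.
have eL : Lf = Lg.
  by apply: lt_sorted_eq => // x; rewrite !mem_sort cfg.
have rk (h : I -> int) j : rkn h j = count (fun y => y < h j) (sort <=%R (codom h)).
  rewrite ((seq.permP (permEl (perm_sort <=%R (codom h)))) (fun y => y < h j)) /rkn /codom /image_mem count_map.
  rewrite cardE -size_filter /enum_mem /= filter_predT; congr size; by apply: eq_filter=> k; rewrite !inE.
have Ef := nth_count_sorted sLf (_ : f i \in Lf).
have Eg := nth_count_sorted sLg (_ : g i \in Lg).
rewrite -Ef ?mem_sort ?codom_f // -Eg ?mem_sort ?codom_f //.
by rewrite -!rk rfg eL.
Qed.

End P1.
Import P1.

Module P2.
Import Order.TTheory GRing.Theory Num.Theory.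
Local Open Scope ring_scope.
Notation sval := Defs.sval.

Definition sg (e : bool) (x : nat) : int := if e then - (Posz x.+1) else Posz x.+1.

Lemma sg_lt e e' x y : (sg e x < sg e' y) =
  if e == e' then (if e then (y < x)%N else (x < y)%N) else e.
Proof. by case: e; case: e'; rewrite /sg /=; lia. Qed.

Lemma sg_lt0 e x : (sg e x < 0) = e.
Proof. by case: e; rewrite /sg /=; lia. Qed.

Lemma sg_gt0 e x : (0 < sg e x) = ~~ e.
Proof. by case: e; rewrite /sg /=; lia. Qed.

Lemma sg_inj e e' x y : sg e x = sg e' y -> e = e' /\ x = y.
Proof. by case: e; case: e'; rewrite /sg /=; lia. Qed.

Definition sv n (s : sperm n) (i : 'I_n) : int := sg (s.2 i) (s.1 i).

Lemma sval_sv n (s : sperm n) j (Hj : (j < n)%N) : sval s j.+1 = sv s (Ordinal Hj).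
Proof.
rewrite /sval; case: insubP => [o _ Eo|]; last by rewrite Hj.
by have -> : o = Ordinal Hj by apply/val_inj.
Qed.

Lemma sval_out n (s : sperm n) j : (n <= j)%N -> sval s j.+1 = 0.
Proof.
by move=> h; rewrite /sval; case: insubP => [o|] //; rewrite ltnNge h.
Qed.

Lemma sv_inj n (s : sperm n) : injective (sv s).
Proof. by move=> i j /sg_inj [_ /val_inj /perm_inj]. Qed.

Lemma sperm_eq n (s t : sperm n) : sv s =1 sv t -> s = t.
Proof.
move=> h; case: s t h => [p e] [q f] h.
have H i := sg_inj (h i); congr pair.
  by apply/permP=> i; apply/val_inj; case: (H i).
by apply/ffunP=> i; case: (H i).
Qed.

Definition negs n (s : sperm n) : sperm n := (s.1, [ffun i => ~~ s.2 i]).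

Lemma sval_negs n (s : sperm n) k : sval (negs s) k = - sval s k.
Proof.
case: k => [|j]; first by rewrite /sval oppr0. case: (ltnP j n) => h.
  by rewrite !sval_sv /sv /sg /= ffunE; case: (s.2 _); rewrite ?opprK.
by rewrite !sval_out.
Qed.

Lemma negsK n : involutive (@negs n).
Proof. by case=> p e; rewrite /negs /=; congr pair; apply/ffunP=> i; rewrite !ffunE negbK. Qed.

Lemma card_sperm n : #|{: sperm n}| = (n`! * 2 ^ n)%N.
Proof. by rewrite card_prod card_Sn card_ffun card_bool card_ord. Qed.

Lemma rkn_ord m (f : 'I_m -> int) i : (rkn f i < m)%N.
Proof. by have := rkn_bound f i; rewrite card_ord. Qed.

Definition rk m (f : 'I_m -> int) i : 'I_m := Ordinal (rkn_ord f i).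

Lemma rk_inj m (f : 'I_m -> int) : injective f -> injective (rk f).
Proof. by move=> H i j /(congr1 val) /= /(rkn_inj H). Qed.

Definition rkp m (f : 'I_m -> int) (H : injective f) : {perm 'I_m} := perm (rk_inj H).

Lemma rkpE m (f : 'I_m -> int) (H : injective f) i : val (rkp H i) = rkn f i.
Proof. by rewrite /rkp permE. Qed.

Lemma rkp_lt m (f : 'I_m -> int) (H : injective f) i j :
  (rkp H i < rkp H j)%N = (f i < f j).
Proof. by rewrite !rkpE rkn_lt. Qed.

Definition fa m n (s : sperm n) (pos : 'I_m -> 'I_n) i : int := Posz (s.1 (pos i)).

Lemma fa_inj m n (s : sperm n) (pos : 'I_m -> 'I_n) :
  injective pos -> injective (fa s pos).
Proof. by move=> H i j [] /val_inj /perm_inj /H. Qed.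

Definition restr m n (s : sperm n) (pos : 'I_m -> 'I_n) (H : injective pos) : sperm m :=
  (rkp (fa_inj (s:=s) H), [ffun i => s.2 (pos i)]).

Lemma restr_lt m n (s : sperm n) (pos : 'I_m -> 'I_n) (H : injective pos) i j :
  (sv (restr s H) i < sv (restr s H) j) = (sv s (pos i) < sv s (pos j)).
Proof.
rewrite /sv !sg_lt /restr /= !ffunE.
by rewrite !rkp_lt /fa !ltz_nat.
Qed.

Lemma restr_lt0 m n (s : sperm n) (pos : 'I_m -> 'I_n) (H : injective pos) i :
  (sv (restr s H) i < 0) = (sv s (pos i) < 0).
Proof. by rewrite /sv !sg_lt0 /= ffunE. Qed.

Lemma restr_gt0 m n (s : sperm n) (pos : 'I_m -> 'I_n) (H : injective pos) i :
  (0 < sv (restr s H) i) = (0 < sv s (pos i)).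
Proof. by rewrite /sv !sg_gt0 /= ffunE. Qed.

Lemma restr_sval m n (s : sperm n) (pos : 'I_m -> 'I_n) (H : injective pos) d :
  (forall i, val (pos i) = (d + i)%N) ->
  forall k1 k2, (0 < k1 <= m)%N -> (0 < k2 <= m)%N ->
  (sval (restr s H) k1 < sval (restr s H) k2) = (sval s (d + k1) < sval s (d + k2)).
Proof.
move=> Hd [|j1] [|j2] // /andP[_ h1] /andP[_ h2].
have e1 : (d + j1 < n)%N by rewrite -(Hd (Ordinal h1)) ltn_ord.
have e2 : (d + j2 < n)%N by rewrite -(Hd (Ordinal h2)) ltn_ord.
rewrite !addnS !(sval_sv _ h1) !(sval_sv _ h2) (sval_sv _ e1) (sval_sv _ e2) restr_lt.
have -> : Ordinal e1 = pos (Ordinal h1) by apply/val_inj; rewrite /= Hd.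
by have -> : Ordinal e2 = pos (Ordinal h2) by apply/val_inj; rewrite /= Hd.
Qed.

Lemma restr_sval0 m n (s : sperm n) (pos : 'I_m -> 'I_n) (H : injective pos) d :
  (forall i, val (pos i) = (d + i)%N) ->
  forall k, (0 < k <= m)%N ->
  (sval (restr s H) k < 0) = (sval s (d + k) < 0) /\
  (0 < sval (restr s H) k) = (0 < sval s (d + k)).
Proof.
move=> Hd [|j] // /andP[_ h].
have e : (d + j < n)%N by rewrite -(Hd (Ordinal h)) ltn_ord.
rewrite !addnS !(sval_sv _ h) (sval_sv _ e) restr_lt0 restr_gt0.
by have -> : Ordinal e = pos (Ordinal h) by apply/val_inj; rewrite /= Hd.
Qed.

End P2.
Import P2.

Module P3.
Import Order.TTheory GRing.Theory Num.Theory.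
Local Open Scope ring_scope.
Notation sval := Defs.sval.
Arguments Defs.sval : simpl never.

Lemma sg_neq0 e x : sg e x != 0.
Proof. by case: e; rewrite /sg /=; lia. Qed.

Lemma sval_neq n (s : sperm n) k1 k2 :
  k1 != k2 -> (k1 <= n)%N -> (k2 <= n)%N -> sval s k1 != sval s k2.
Proof.
case: k1 => [|j1]; case: k2 => [|j2] // ne h1 h2.
- by rewrite (sval_sv _ h2) /= eq_sym sg_neq0.
- by rewrite (sval_sv _ h1) /= sg_neq0.
rewrite (sval_sv _ h1) (sval_sv _ h2); apply/negP=> /eqP /sv_inj /(congr1 val) /=.
by move=> e; move: ne; rewrite e eqxx.
Qed.

Lemma lt_flip (x y : int) b : x != y ->
  (if b then x < y else y < x) = ((x < y) == b).
Proof. by case: b => ne; rewrite ?eqbT ?eqbF //; lia. Qed.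

Definition psi m (s : sperm m) : {perm 'I_m} * {ffun 'I_m -> bool} :=
  (rkp (@sv_inj m s), [ffun v => s.2 ((s.1)^-1 v)%g]).

Lemma codom_sv m (s : sperm m) x :
  (x \in codom (sv s)) = [exists v, x == sg ((psi s).2 v) v].
Proof.
apply/codomP/existsP.
  by move=> [i ->]; exists (s.1 i); rewrite /= ffunE permK.
by move=> [v /eqP ->]; exists ((s.1)^-1 v)%g; rewrite /sv /= ffunE permKV.
Qed.

Lemma psi_inj m : injective (@psi m).
Proof.
move=> s t e; apply: sperm_eq; apply: (rank_det (@sv_inj m s) (@sv_inj m t)).
  by move=> x; rewrite !codom_sv e.
by move=> i; have := congr1 (fun p : {perm 'I_m} * {ffun 'I_m -> bool} => val (p.1 i)) e; rewrite /= !rkpE.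
Qed.

Definition altQ e m (t : sperm m) :=
  all (fun k => (sval t k < sval t k.+1) == (odd k (+) e)) (iota 1 m.-1).

Definition EP m (p : {perm 'I_m}) := [forall i : 'I_m, forall j : 'I_m,
   (val j == (val i).+1) ==> (if odd i then p i < p j else p j < p i)%N].

Lemma altQ_EP m (t : sperm m) : altQ true t = EP (psi t).1.
Proof.
have key (i j : 'I_m) : val j = (val i).+1 ->
  (if odd i then (psi t).1 i < (psi t).1 j else (psi t).1 j < (psi t).1 i)%N =
  ((sval t (val i).+1 < sval t (val i).+2) == odd (val i).+1 (+) true).
  move=> ej; rewrite /psi /= !rkp_lt.
  rewrite (sval_sv _ (ltn_ord i)).
  have hj : ((val i).+1 < m)%N by rewrite -ej ltn_ord.
  rewrite (sval_sv _ hj) /= addbT negbK.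
  have -> : Ordinal hj = j by apply/val_inj.
  have -> : Ordinal (ltn_ord i) = i by apply/val_inj.
  rewrite lt_flip //; apply/negP=> /eqP /sv_inj /(congr1 val); rewrite ej.
  by lia.
rewrite /altQ /EP; apply/allP/forallP.
  move=> H i; apply/forallP=> j; apply/implyP=> /eqP ej.
  rewrite key //; apply: H; rewrite mem_iota; move: (ltn_ord j); rewrite ej; lia.
move=> H [|k]; rewrite mem_iota // => hk.
have hi : (k < m)%N by lia.
have hj : (k.+1 < m)%N by lia.
have := H (Ordinal hi) => /forallP/(_ (Ordinal hj)) /implyP /(_ (eqxx _)).
by rewrite key.
Qed.

Lemma alt_true m : #|[set t : sperm m | altQ true t]| = (2 ^ m * Euler m)%N.
Proof.
rewrite (eq_card (B := [set t | EP (psi t).1])); last by move=> t; rewrite !inE altQ_EP.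
rewrite (count_inj (D := setT) (fun b : {perm 'I_m} * {ffun 'I_m -> bool} => EP b.1) (@psi_inj m)) //; last first.
  by rewrite cardsT.
have -> : [set b in [set: {perm 'I_m} * {ffun 'I_m -> bool}] | EP b.1] =
   setX [set p | EP p] setT.
  by apply/setP=> b; rewrite !inE andbT.
by rewrite cardsX cardsT card_ffun card_bool card_ord mulnC.
Qed.

Lemma altQ_negs m (t : sperm m) : altQ false (negs t) = altQ true t.
Proof.
rewrite /altQ; apply: eq_in_all=> k; rewrite mem_iota => hk.
have ne : sval t k != sval t k.+1 by apply: sval_neq; lia.
rewrite !sval_negs ltrN2 addbT addbF.
move: ne; case: (ltgtP (sval t k) (sval t k.+1)) => //; by case: (odd k).
Qed.

Lemma alt_count e m : #|[set t : sperm m | altQ e t]| = (2 ^ m * Euler m)%N.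
Proof.
case: e; first exact: alt_true.
rewrite -alt_true.
have ninj : injective (@negs m) by apply: inv_inj; apply: negsK.
have -> : [set t : sperm m | altQ false t] = [set b in setT | altQ false b].
  by apply/setP=> t; rewrite !inE.
rewrite -(count_inj (D := setT) (fun t => altQ false t) ninj) ?cardsT //.
by apply: eq_card=> t; rewrite !inE altQ_negs.
Qed.

End P3.
Import P3.

Module P4.
Import Order.TTheory GRing.Theory Num.Theory.
Local Open Scope ring_scope.
Notation sval := Defs.sval.
Arguments Defs.sval : simpl never.

Section Split.
Variables (n a : nat) (Ha : (a <= n)%N).

Definition lpos (i : 'I_a) : 'I_n := widen_ord Ha i.
Lemma rpos_proof (i : 'I_(n - a)) : (a + i < n)%N.
Proof. by have := ltn_ord i; lia. Qed.
Definition rpos (i : 'I_(n - a)) : 'I_n := Ordinal (rpos_proof i).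

Lemma lpos_inj : injective lpos.
Proof. by move=> i j /(congr1 val) /= /val_inj. Qed.
Lemma rpos_inj : injective rpos.
Proof. by move=> i j /(congr1 val) /= /addnI /val_inj. Qed.

Lemma lposE i : val (lpos i) = (0 + i)%N. Proof. by []. Qed.
Lemma rposE i : val (rpos i) = (a + i)%N. Proof. by []. Qed.

Lemma cover (k : 'I_n) : (exists i, k = lpos i) \/ (exists i, k = rpos i).
Proof.
case: (ltnP k a) => h.
  by left; exists (Ordinal h); apply/val_inj.
have h' : (k - a < n - a)%N by have := ltn_ord k; lia.
by right; exists (Ordinal h'); apply/val_inj; rewrite /= subnKC.
Qed.

Definition Bset (s : sperm n) := [set s.1 (lpos i) | i : 'I_a].

Lemma Bset_compl (s : sperm n) : [set s.1 (rpos i) | i : 'I_(n - a)] = ~: Bset s.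
Proof.
apply/setP=> y; rewrite inE; apply/imsetP/idP.
  move=> [i _ ->]; apply/negP=> /imsetP [j _] /perm_inj /(congr1 val) /=.
  by have := ltn_ord j; lia.
move=> yB; case: (cover ((s.1)^-1 y)%g) => [[i ei]|[i ei]].
  by move: yB; rewrite -(permKV s.1 y) ei; move/negP; case; apply: imset_f.
by exists i => //; rewrite -ei permKV.
Qed.

Definition Phi (s : sperm n) :=
  (Bset s, restr s lpos_inj, restr s rpos_inj).

Lemma codom_fa m (s : sperm n) (pos : 'I_m -> 'I_n) x :
  (x \in codom (fa s pos)) = [exists y, (y \in [set s.1 (pos i) | i : 'I_m]) && (x == Posz y)].
Proof.
apply/codomP/existsP.
  by move=> [i ->]; exists (s.1 (pos i)); rewrite imset_f ?eqxx.
by move=> [y /andP[/imsetP[i _ ->] /eqP ->]]; exists i.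
Qed.

Lemma abs_eq m (s t : sperm n) (pos : 'I_m -> 'I_n) (H : injective pos) :
  [set s.1 (pos i) | i : 'I_m] = [set t.1 (pos i) | i : 'I_m] ->
  (restr s H).1 = (restr t H).1 -> forall i, s.1 (pos i) = t.1 (pos i).
Proof.
move=> eB e1 i.
have h : fa s pos i = fa t pos i.
  apply: (rank_det (fa_inj (s:=s) H) (fa_inj (s:=t) H)).
    by move=> x; rewrite !codom_fa eB.
  by move=> j; have := congr1 (fun p : {perm 'I_m} => val (p j)) e1; rewrite /= !rkpE.
by move: h; rewrite /fa => -[h]; apply/val_inj.
Qed.

Lemma Phi_inj : injective Phi.
Proof.
move=> s t e.
have eB : Bset s = Bset t by have := congr1 (fun x => x.1.1) e.
have e1 : restr s lpos_inj = restr t lpos_inj by have := congr1 (fun x => x.1.2) e.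
have e2 : restr s rpos_inj = restr t rpos_inj by have := congr1 (fun x => x.2) e.
have eBr : [set s.1 (rpos i) | i : 'I_(n - a)] = [set t.1 (rpos i) | i : 'I_(n - a)] by rewrite !Bset_compl eB.
have al := abs_eq eB (congr1 fst e1).
have ar := abs_eq eBr (congr1 fst e2).
have sl i : s.2 (lpos i) = t.2 (lpos i).
  by have := congr1 (fun x : sperm a => x.2 i) e1; rewrite /= !ffunE.
have sr i : s.2 (rpos i) = t.2 (rpos i).
  by have := congr1 (fun x : sperm (n - a) => x.2 i) e2; rewrite /= !ffunE.
case: s t e eB e1 e2 eBr al ar sl sr => [p f] [q g] /= _ _ _ _ _ al ar sl sr.
congr pair.
  by apply/permP=> k; case: (cover k) => [[i ->]|[i ->]]; rewrite ?al ?ar.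
by apply/ffunP=> k; case: (cover k) => [[i ->]|[i ->]]; rewrite ?sl ?sr.
Qed.

Definition Dset := setX (setX [set B : {set 'I_n} | #|B| == a] [set: sperm a])
                        [set: sperm (n - a)].

Lemma card_Dset : #|Dset| = #|{: sperm n}|.
Proof.
rewrite /Dset !cardsX !cardsT card_draws !card_sperm card_ord.
have e : (2 ^ n = 2 ^ a * 2 ^ (n - a))%N by rewrite -expnD subnKC.
rewrite e -(bin_fact Ha); ring.
Qed.

Lemma Phi_D s : Phi s \in Dset.
Proof.
rewrite /Dset !inE /= andbT /Bset card_imset ?card_ord ?eqxx //.
by move=> i j /perm_inj /lpos_inj.
Qed.

Lemma split_count (P : pred (sperm a)) (Q : pred (sperm (n - a))) :
  #|[set s : sperm n | P (restr s lpos_inj) && Q (restr s rpos_inj)]| =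
  ('C(n, a) * #|[set t | P t]| * #|[set t | Q t]|)%N.
Proof.
have := count_inj (fun x => P x.1.2 && Q x.2) Phi_inj Phi_D (esym card_Dset).
move=> ->.
have -> : [set b in Dset | P b.1.2 && Q b.2] =
   setX (setX [set B : {set 'I_n} | #|B| == a] [set t | P t]) [set t | Q t].
  apply/setP=> [[[B x] y]]; by rewrite !inE /= !andbT !andbA.
by rewrite !cardsX card_draws card_ord.
Qed.

End Split.

End P4.
Import P4.

Module P5.
Import Order.TTheory GRing.Theory Num.Theory.
Notation sval := Defs.sval.
Arguments Defs.sval : simpl never.

Lemma sval0 n (t : sperm n) : sval t 0 = 0%R.
Proof. by rewrite /sval. Qed.

Lemma inDB_ne n (t : sperm n) i : sval t i != sval t i.+1 ->
  inDB t i = (sval t i < sval t i.+1)%R (+) odd i.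
Proof.
rewrite /inDB; case: (odd i) => /=; rewrite ?andbT ?andbF ?orbF ?addbF ?addbT //.
by case: ltgtP.
Qed.

Lemma path_lt_all x p y : path ltn x (rcons p y) -> all (fun z => z < y) (x :: p).
Proof.
elim: p x => [|z p IH] x /=; first by rewrite andbT.
move=> /andP[xz /IH /= /andP[zy ->]]; rewrite zy andbT.
by rewrite andbT (ltn_trans xz zy).
Qed.

Section Step.
Variables (n s : nat) (S' : seq nat).
Hypotheses (s0 : (0 < s)) (sn : (s < n)) (Ss : all (fun x => x < s) S').

Let Ha : (s <= n) := ltnW sn.

Lemma L1 (t : sperm n) k1 k2 : (k1 <= s) -> (k2 <= s) ->
  (sval (restr t (@lpos_inj n s Ha)) k1 < sval (restr t (@lpos_inj n s Ha)) k2)%R =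
  (sval t k1 < sval t k2)%R.
Proof.
have H := restr_sval0 t (@lpos_inj n s Ha) (@lposE n s Ha).
case: k1 => [|j1]; case: k2 => [|j2] h1 h2; rewrite ?sval0 ?ltxx //.
- by case: (H j2.+1 h2) => _ ->.
- by case: (H j1.+1 h1) => ->.
by rewrite (restr_sval t (@lpos_inj n s Ha) (@lposE n s Ha)).
Qed.

Lemma L2 (t : sperm n) k : (0 < k) -> (k < n - s) ->
  (sval (restr t (@rpos_inj n s Ha)) k < sval (restr t (@rpos_inj n s Ha)) k.+1)%R =
  (sval t (s + k) < sval t (s + k).+1)%R.
Proof.
move=> h1 h2; rewrite (restr_sval t (@rpos_inj n s Ha) (@rposE n s Ha)) ?addnS //; lia.
Qed.

Lemma step : alpha_minus n (rcons S' s) =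
  ('C(n, s) * alpha_minus s S' * (2 ^ (n - s) * Euler (n - s))).
Proof.
rewrite -(alt_count (odd s)) /alpha_minus -split_count.
apply: eq_card=> t; rewrite !inE.
have -> : (iota 0 n = iota 0 s ++ iota s (n - s)) by rewrite -iotaD subnKC.
rewrite all_cat.
have -> : (iota s (n - s) = s :: iota (s + 1) (n - s - 1)).
  case E: (n - s) => [|k]; first by lia.
  by rewrite /= addn1 subn1.
rewrite /= mem_rcons inE eqxx implybT andTb.
rewrite iotaDl all_map (L1 t (k1:=1) (k2:=0)) // sval0 -andbA; congr [&& _, _ & _].
  apply: eq_in_all=> i; rewrite mem_iota add0n => hi.
  rewrite mem_rcons inE (_ : (i == s) = false); last by apply/negbTE; lia.
  congr (_ ==> _).
  by rewrite /inDB (L1 t (k1:=i) (k2:=i.+1)) ?(L1 t (k1:=i.+1) (k2:=i)) //; lia.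
rewrite /altQ (_ : (n - s).-1 = n - s - 1); last by lia.
apply: eq_in_all=> k; rewrite mem_iota => hk /=.
rewrite mem_rcons inE (_ : (s + k == s) = false); last by apply/negbTE; lia.
have -> : (s + k \in S') = false.
  by apply/negP=> /(allP Ss) /=; lia.
rewrite implybF inDB_ne; last by apply: sval_neq; lia.
rewrite L2; try lia.
Qed.

End Step.

Lemma base n : (0 < n) -> alpha_minus n [::] = Snake n.
Proof.
move=> n0.
have ninj : injective (@negs n) by apply: inv_inj; apply: negsK.
rewrite /alpha_minus /Snake.
set C := fun σ : sperm n => _.
rewrite (_ : [set σ | C σ] = [set b in setT | C b]); last by apply/setP=> x; rewrite !inE.
rewrite -(count_inj (D := setT) C ninj) ?cardsT //.
apply: eq_card=> t; rewrite !inE /C.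
case: n n0 t ninj C => // n _ t _ _.
rewrite /= !sval_negs oppr_lt0; case: (ltrP 0 (sval t 1)) => h //=.
rewrite implybF /inDB /= sval0 !sval_negs oppr_gt0 ltNge (ltW h) /=.
rewrite andbF andTb; apply: eq_in_all=> i; rewrite mem_iota => hi.
have ne : sval t i != sval t i.+1 by apply: sval_neq; lia.
rewrite in_nil implybF !sval_negs !ltrN2.
by move: ne; case: (odd i) => /=; case: ltgtP.
Qed.

End P5.
Import P5.

Lemma gaps_rcons n S s : gaps n (rcons S s) = rcons (gaps s S) (n - s).
Proof. by rewrite /gaps -cats1 pairmap_cat last_rcons /= cats1. Qed.

Lemma gaps_dvd n S : path ltn 0 (rcons S n) -> \prod_(x <- gaps n S) x`! %| n`!.
Proof.
elim/last_ind: S n => [|S s IH] n H.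
  by rewrite /gaps /= big_seq1 subn0.
move: H; rewrite rcons_path last_rcons => /andP[H1 sn].
rewrite gaps_rcons big_rcons /= -(bin_fact (ltnW sn)).
by apply: dvdn_mull; apply: dvdn_mul => //; apply: IH.
Qed.

Lemma multi_rcons n s G : \prod_(x <- G) x`! %| s`! -> s <= n ->
  multinomial n (rcons G (n - s)) = 'C(n, s) * multinomial s G.
Proof.
move=> dG sn; rewrite /multinomial big_rcons /=.
set P := \prod_(x <- G) x`!.
have Pp : 0 < P by apply: prodn_gt0 => x; apply: fact_gt0.
have e := divnK dG.
rewrite -(bin_fact sn) -{1}e.
set M := s`! %/ P.
rewrite (_ : 'C(n, s) * (M * P * (n - s)`!) = ('C(n, s) * M) * (P * (n - s)`!)); last by ring.
by rewrite mulnK // muln_gt0 Pp fact_gt0.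
Qed.

Theorem lemma3p1 (n : nat) (S : seq nat) :
  1 <= n ->
  path ltn 0 (rcons S n) ->
  alpha_minus n S =
    multinomial n (gaps n S) * Snake (head 0 (gaps n S)) *
    \prod_(g <- behead (gaps n S)) (2 ^ g * Euler g).
Proof.
elim/last_ind: S n => [|S s IH] n n1 H.
  rewrite base // /multinomial /gaps /= big_seq1 subn0 divnn fact_gt0 big_nil.
  by rewrite mul1n muln1.
have H0 := H.
move: H; rewrite rcons_path last_rcons => /andP[H1 sn].
have := path_lt_all H1 => /= /andP[s0 Ss].
rewrite step // IH // gaps_rcons multi_rcons ?(ltnW sn) //; last exact: gaps_dvd.
have : 0 < size (gaps s S) by rewrite size_pairmap size_rcons.
case: (gaps s S) => [|g G] //= _.
rewrite big_rcons /=; ring.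
Qed.
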